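(* Fix $m\le n$. There is a unique bijection $\phi_m$ between the set of complete $m$-chains of $\Pi(n)$ and the set of ordered $(m,n)$-forests that sends a chain $C$ with top element $P$ and Jordan-Hölder permutation $\lambda$ to an ordered forest with priority forest $P$ and priority traversal $\lambda^{-1}$. The bijection $\phi_m$ is explicitly defined as $\phi_m(C) = \lambda^{-1}(P)$.
   Context: An ordered $(m,n)$-forest is a rooted forest with $n+1$ nodes and $m$ edges whose component trees $T_0,\dots,T_{n-m}$ are totally ordered, with roots marked $\circ,\circ_1,\dots,\circ_{n-m}$ recording the order, and whose $m$ non-root vertices are labeled by $[m]=\{1,\dots,m\}$. The priority-first search on an ordered forest starts with only the children of $\circ$ unblocked; at each step it visits the unblocked node with smallest label and unblocks its children; when a component tree is exhausted it moves to the next tree, reads its root and unblocks the root's children. The priority traversal of the forest is the resulting sequence of visited nodes (the initial root $\circ$ is not recorded, and the other roots are recorded as $-$), a partial permutation. The priority forest of an ordered forest is obtained by relabeling its nodes in the order they are visited by priority search, with $\circ$ labeled $0$. In general, a priority forest labeled with $\{0,1,\dots,n\}$ is a rooted forest $(T_0,\dots,T_{n-m})$ whose component trees are increasing and ordered by root labels, such that for $j<k$ every label of $T_j$ is smaller than every label of $T_k$. The priority lattice $\Pi(n)$ consists of all priority forests labeled with $\{0,1,\dots,n\}$ together with an extra top element $\hat 1$, ordered by inclusion of edge sets for priority forests; its bottom element $\hat 0$ is the edgeless forest. For a cover relation $P'\lessdot P$ between priority forests, the edge label $\lambda(P',P)$ is the larger endpoint of the unique edge in $E(P)\setminus E(P')$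 (covers involving $\hat 1$ are unlabeled). A complete $m$-chain is a saturated chain $C:\hat 0=P_0\lessdot P_1\lessdot\cdots\lessdot P_m=P$ of length $m$ starting at $\hat 0$; its Jordan-Hölder permutation is $\lambda(C)=(\lambda(P_0,P_1),\dots,\lambda(P_{m-1},P_m))$, a partial permutation. For such $C$ with top element $P$, $\lambda^{-1}(P)$ denotes the ordered forest obtained by relabeling the non-root vertices of $P$ according to the partial permutation $\lambda(C)^{-1}$ and recording the relative order of the roots in the subscripts of the $\circ$'s. *)

(* Defs.v *)
From mathcomp Require Import all_boot.
Set Implicit Arguments. Unset Strict Implicit. Unset Printing Implicit Defensive.

(* A (rooted) forest on the vertex set 'I_n.+1 = {0..n} is given by its *)
(* parent map: P i = Some p iff (p,i) is an edge with p the parent of i; *)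
(* P i = None iff i is a root.                                          *)

Definition forest (n : nat) := {ffun 'I_n.+1 -> option 'I_n.+1}.

(* the root of the component tree containing x (n parent steps suffice
   for increasing forests, whose depth is at most n) *)
Definition froot n (P : forest n) (x : 'I_n.+1) : 'I_n.+1 :=
  iter n (fun y => if P y is Some p then p else y) x.

Definition is_prio_forest n (P : forest n) : bool :=
  [forall i, forall p, (P i == Some p) ==> (p < i)] &&
  [forall x, forall y, (froot P x < froot P y) ==> (x < y)].

(* inclusion of edge sets E(P) \subset E(Q) *)
Definition le_forest n (P Q : forest n) : bool :=
  [forall i, (P i != None) ==> (Q i == P i)].

Definition bot_forest n : forest n := [ffun _ => None].

(* cover relation P' <. P between priority forests in Pi(n) (the extra top
   element \hat 1 lies above every priority forest, so it never lies strictly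
   between two priority forests) *)
Definition covers n (P' P : forest n) : bool :=
  [&& is_prio_forest P', is_prio_forest P, le_forest P' P, P' != P &
   ~~ [exists R : forest n, [&& is_prio_forest R, le_forest P' R,
                               le_forest R P, R != P' & R != P]]].

(* edge label lambda(P',P): the larger endpoint i of the (unique) edge
   (p,i) in E(P) \ E(P'); the larger endpoint of an edge of an increasing
   forest is the child *)
Definition edge_label n (P' P : forest n) : 'I_n.+1 :=
  odflt ord0 [pick i | (P i != None) && (P' i != P i)].

Definition is_chain n m (C : seq (forest n)) : bool :=
  [&& size C == m.+1, nth (bot_forest n) C 0 == bot_forest n &
   [forall k : 'I_m, covers (nth (bot_forest n) C k) (nth (bot_forest n) C k.+1)]].

Arguments is_chain : clear implicits.

Definition chain_top n m (C : seq (forest n)) : forest n :=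
  nth (bot_forest n) C m.

Definition JH n m (C : seq (forest n)) : seq 'I_n.+1 :=
  [seq edge_label (nth (bot_forest n) C k) (nth (bot_forest n) C k.+1) | k <- iota 0 m].

(* Nodes: roots  inl r  (r : 'I_(n-m).+1), where inl 0 is the root \circ *)
(* and inl r is \circ_r;  non-root vertices  inr k  (k : 'I_m), where     *)
(* inr k carries the label k+1 in [m].                                   *)
(* An ordered forest is given by the parent of each non-root vertex.    *)

Definition onode n m := ('I_(n - m).+1 + 'I_m)%type.
Definition oforest n m := {ffun 'I_m -> onode n m}.

Definition ostep n m (F : oforest n m) (x : onode n m) : onode n m :=
  match x with inl r => inl r | inr k => F k end.

(* acyclicity: following parents from every non-root vertex reaches a root
   (m steps suffice if it does); then F is a rooted forest with the n-m+1
   component trees T_0, ..., T_{n-m} rooted at \circ, \circ_1, ..., and m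
   edges *)
Definition is_oforest n m (F : oforest n m) : bool :=
  [forall k, if iter m (ostep F) (inr k) is inl _ then true else false].

(* State: index j of the current tree (roots
   \circ,...,\circ_j have been read), list vis of visited non-root vertices.
   Unblocked vertices are the unvisited children of read roots / visited
   vertices.  The
   result is the list of visited nodes in order (initial root excluded). *)
Fixpoint psearch n m (F : oforest n m) (fuel j : nat) (vis : seq 'I_m)
  : seq (onode n m) :=
  match fuel with
  | 0 => [::]
  | fuel'.+1 =>
    let ready k := (k \notin vis) &&
                   (match F k with inl r => r <= j | inr p => p \in vis end) in
    match [pick k | ready k && [forall k', ready k' ==> (k <= k')]] with
    | Some k => inr k :: psearch F fuel' j (k :: vis)
    | None => inl (inord j.+1) :: psearch F fuel' j.+1 vis
    end
  end.

Definition porder n m (F : oforest n m) : seq (onode n m) := psearch F n 0 [::].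

(* priority traversal: a partial permutation, i.e. a word over [m] u {-};
   Some k stands for the label k+1 and None for "-" *)
Definition prio_traversal n m (F : oforest n m) : seq (option 'I_m) :=
  [seq (match x with inr k => Some k | inl _ => None end) | x <- porder F].

(* priority forest: relabel nodes in visiting order, \circ labeled 0 *)
Definition prio_forest n m (F : oforest n m) : forest n :=
  let ord := porder F in
  let lab (x : onode n m) : nat :=
    if x == inl ord0 then 0 else (index x ord).+1 in
  let node_at (i : 'I_n.+1) : onode n m :=
    if val i == 0 then inl ord0 else nth (inl ord0) ord (val i).-1 in
  [ffun i => match node_at i with
             | inr k => Some (inord (lab (F k)))
             | inl _ => None
             end].

(* inverse lambda^{-1} of a partial permutation lambda = (l_1..l_m) of [n]:
   the word of length n whose j-th letter is k if l_k = j, and "-" otherwise *)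
Definition pinv n m (lam : seq 'I_n.+1) : seq (option 'I_m) :=
  [seq (if j \in lam then insub (index j lam) else None)
  | j <- [seq inord i : 'I_n.+1 | i <- iota 1 n]].

(* lambda^{-1}(P): relabel the non-root vertex lambda_k of the top element P
   by the label k (and the roots by \circ, \circ_1, ... in increasing order) *)
Definition phi n m (C : seq (forest n)) : oforest n m :=
  let P := chain_top m C in
  let lam := JH m C in
  let img (k : 'I_m) (p : 'I_n.+1) : onode n m :=
    if p \in lam then inr (insubd k (index p lam))
    else inl (inord #|[pred i : 'I_n.+1 | (i < p) && (P i == None)]|) in
  [ffun k : 'I_m => match P (nth ord0 lam k) with
             | Some p => img k p
             | None => inl ord0
             end].

Arguments phi : clear implicits.

Definition bij_chains_oforests n m (psi : seq (forest n) -> oforest n m) : Prop :=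
  [/\ forall C, is_chain n m C -> is_oforest (psi C),
      {in is_chain n m &, injective psi} &
      forall F, is_oforest F -> exists2 C, is_chain n m C & psi C = F].

Definition phi_spec n m (psi : seq (forest n) -> oforest n m) : Prop :=
  forall C, is_chain n m C ->
    prio_forest (psi C) = chain_top m C /\
    prio_traversal (psi C) = pinv m (JH m C).

(* Main.v *)
From mathcomp Require Import all_boot.
From mathcomp Require Import zify.
Require Import Defs.
Set Implicit Arguments. Unset Strict Implicit. Unset Printing Implicit Defensive.

Section Prio.
Variable n : nat.
Implicit Types P Q : forest n.

Definition LP P := forall (i p : 'I_n.+1), P i = Some p ->
  p < i /\ forall r : 'I_n.+1, p < r -> r < i -> P r <> None.

Definition fstep P (y : 'I_n.+1) := if P y is Some p then p else y.

Lemma iter_root P t x : P x = None -> iter t (fstep P) x = x.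
Proof. by move=> Hx; elim: t => //= t ->; rewrite /fstep Hx. Qed.

Section Inc.
Variable P : forest n.
Hypothesis inc : forall i p, P i = Some p -> p < i.

Lemma iter_le t (x : 'I_n.+1) : iter t (fstep P) x <= x.
Proof.
elim: t => //= t IH; rewrite /fstep; case E: (P _) => [p|] //.
by apply: leq_trans (ltnW (inc E)) IH.
Qed.

Lemma iter_rootP t (x : 'I_n.+1) : x <= t -> P (iter t (fstep P) x) = None.
Proof.
elim: t x => [|t IH] x Hx.
  case E: (P x) => [p|] //; have := inc E; by case: x Hx E => [[|]].
rewrite iterSr; case E: (P x) => [p|].
  rewrite /fstep E; apply: IH; have := inc E; by move=> H; rewrite -ltnS (leq_trans H Hx).
by rewrite /fstep E iter_root.
Qed.

Lemma froot_root x : P (froot P x) = None.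
Proof. by apply: iter_rootP; rewrite -ltnS. Qed.

Lemma froot_id x : P x = None -> froot P x = x.
Proof. exact: iter_root. Qed.

Lemma froot_par x p : P x = Some p -> froot P x = froot P p.
Proof.
move=> E; change (iter n (fstep P) x = iter n (fstep P) p).
have Hpx := inc E.
have Hn : 0 < n by rewrite -ltnS (leq_trans _ (ltn_ord x)) // ltnS (leq_ltn_trans _ Hpx).
have -> : iter n (fstep P) x = iter n.-1 (fstep P) (fstep P x) by rewrite -iterSr prednK.
have -> : iter n (fstep P) p = fstep P (iter n.-1 (fstep P) p) by rewrite -iterS prednK.
rewrite {2}/fstep E.
have : P (iter n.-1 (fstep P) p) = None.
  apply: iter_rootP; rewrite -ltnS prednK //; exact: leq_trans Hpx (ltn_ord x).
by rewrite /fstep => ->.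
Qed.

Lemma froot_le (x : 'I_n.+1) : froot P x <= x.
Proof. exact: iter_le. Qed.
End Inc.

Lemma prio_LP P : is_prio_forest P -> LP P.
Proof.
case/andP=> /forallP Hinc /forallP Hint.
have inc : forall i p, P i = Some p -> p < i.
  by move=> i p E; have /forallP/(_ p) := Hinc i; rewrite E eqxx.
move=> i p E; split; first exact: inc E.
move=> r Hpr Hri Hr.
have H1 : froot P r = r by exact: froot_id.
have H2 : froot P i < froot P r.
  by rewrite H1 (froot_par inc E); apply: leq_ltn_trans (froot_le inc p) Hpr.
have /forallP/(_ r) := Hint i; rewrite H2 /=.
by move=> Hir; have := ltn_trans Hri Hir; rewrite ltnn.
Qed.

Lemma LP_prio P : LP P -> is_prio_forest P.
Proof.
move=> H.
have inc : forall i p, P i = Some p -> p < i by move=> i p /H [].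
have NR : forall x r : 'I_n.+1, froot P x < r -> r <= x -> P r <> None.
  move=> x; have [k] := ubnP x; elim: k x => [|k IH] x // Hx r H1 H2.
  case E: (P x) => [p|].
    rewrite (froot_par inc E) in H1.
    have [Hrp|Hpr] := leqP r p.
      by apply: (IH p) => //; rewrite -ltnS (leq_trans _ Hx) // ltnS (inc _ _ E).
    rewrite leq_eqVlt in H2; case/orP: H2 => [/eqP/val_inj ->|H2]; first by rewrite E.
    by have [_] := H _ _ E; apply.
  by rewrite froot_id // in H1; move: (leq_trans H1 H2); rewrite ltnn.
apply/andP; split.
  apply/forallP=> i; apply/forallP=> p; apply/implyP=> /eqP E; exact: inc E.
apply/forallP=> x; apply/forallP=> y; apply/implyP=> Hxy.
rewrite ltnNge; apply/negP=> Hyx.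
apply: (NR x (froot P y)) => //; last exact: froot_root.
exact: leq_trans (froot_le inc y) Hyx.
Qed.

Lemma prioE P : is_prio_forest P <-> LP P.
Proof. split; [exact: prio_LP | exact: LP_prio]. Qed.

End Prio.

Section Cover.
Variable n : nat.
Implicit Types P Q R : forest n.

Lemma leP P Q : reflect (forall i, P i <> None -> Q i = P i) (le_forest P Q).
Proof.
apply: (iffP forallP) => H i.
  by move=> Hi; have := H i; rewrite (introN eqP Hi) /= => /eqP.
by apply/implyP=> /eqP Hi; apply/eqP; apply: H.
Qed.

Lemma le_trans P Q R : le_forest P Q -> le_forest Q R -> le_forest P R.
Proof.
move=> /leP H1 /leP H2; apply/leP=> i Hi.
by rewrite H2 ?H1 // H1.
Qed.

Lemma cover_one P' P : covers P' P ->
  exists i, [/\ P' i = None, P i <> None & forall j, j != i -> P' j = P j].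
Proof.
case/and5P=> /prioE H' /prioE H /leP Hle Hne Hno.
have [i0 Hi0] : exists i, (P' i == None) && (P i != None).
  apply/existsP; apply: contraR Hne => /existsPn Hall; apply/eqP/ffunP=> i.
  have := Hall i; case E: (P' i) => [p|] /=.
    by rewrite -E Hle // E.
  by rewrite negbK => /eqP ->.
pose d i := (P' i == None) && (P i != None).
case: (@arg_minnP _ i0 d (fun i : 'I_n.+1 => val i) Hi0) => i1 /andP[/eqP H1a /eqP H1b] Hmin.
exists i1; split=> //.
pose R := [ffun j => if j == i1 then P i1 else P' j].
have HR : LP R.
  move=> i p; rewrite ffunE; case: eqP => [-> E|Hii E].
    have [Hp Hr] := H _ _ E; split=> // r Hpr Hri; rewrite ffunE.
    case: eqP => [Er|Hr1]; first by rewrite Er ltnn in Hri.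
    case E': (P' r) => [q|] // _; have := Hmin r; rewrite /d E' eqxx /=.
    have Pr := Hr r Hpr Hri; case: (P r) Pr => // q' _ /(_ isT); by rewrite leqNgt Hri.
  have [Hp Hr] := H' _ _ E; split=> // r Hpr Hri; rewrite ffunE.
  by case: eqP => // _; apply: Hr.
have : R == P.
  case: (boolP (R == P)) => // HRP; exfalso; move/negP: Hno; apply; apply/existsP; exists R.
  rewrite (LP_prio HR) HRP /= andbT; apply/and3P; split.
  - apply/leP=> i Hi; rewrite ffunE; case: eqP => // E; move: Hi; by rewrite E H1a.
  - apply/leP=> i; rewrite ffunE; case: eqP => [-> //|_ Hi]; exact: Hle.
  - apply/eqP=> /ffunP/(_ i1); rewrite ffunE eqxx H1a; exact: H1b.
move=> /eqP <- j Hj; by rewrite ffunE (negbTE Hj).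
Qed.

Lemma edge_labelE P' P i : P' i = None -> P i <> None ->
  (forall j, j != i -> P' j = P j) -> edge_label P' P = i.
Proof.
move=> H1 H2 H3; rewrite /edge_label; case: pickP => [j /andP[Hj1 Hj2]|H].
  by apply/eqP; apply: contraNT Hj2 => /H3 ->.
by have := H i; rewrite H1 (introN eqP H2) eq_sym (introN eqP H2).
Qed.

Definition restr P (S : seq 'I_n.+1) : forest n :=
  [ffun i => if i \in S then P i else None].

End Cover.

Definition rdy n m (F : oforest n m) (j : nat) (vis : seq 'I_m) (k : 'I_m) :=
  (k \notin vis) && (match F k with inl r => r <= j | inr p => p \in vis end).

Lemma psearchS n m (F : oforest n m) d j vis : psearch F d.+1 j vis =
  match [pick k | rdy F j vis k && [forall k', rdy F j vis k' ==> (k <= k')]] with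
  | Some k => inr k :: psearch F d j (k :: vis)
  | None => inl (inord j.+1) :: psearch F d j.+1 vis
  end.
Proof. by []. Qed.

Section Data.
Variables (n m : nat) (P : forest n) (lam : seq 'I_n.+1).

Definition cntr (v : nat) := #|[pred i : 'I_n.+1 | (i < v) && (P i == None)]|.

Definition node (i : 'I_n.+1) : onode n m :=
  if insub (index i lam) is Some k then inr k else inl (inord (cntr i)).

Definition phiPL : oforest n m :=
  let img (k : 'I_m) (p : 'I_n.+1) : onode n m :=
    if p \in lam then inr (insubd k (index p lam))
    else inl (inord #|[pred i : 'I_n.+1 | (i < p) && (P i == None)]|) in
  [ffun k : 'I_m => match P (nth ord0 lam k) with
             | Some p => img k p
             | None => inl ord0
             end].

Hypotheses (HP : LP P) (Hs : size lam = m) (Hu : uniq lam)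
  (Hnr : forall i, (P i != None) = (i \in lam))
  (Ho : forall k, k < m -> forall p, P (nth ord0 lam k) = Some p ->
        forall r : 'I_n.+1, p < r -> r < nth ord0 lam k -> r \in take k lam).

Lemma P0 : P ord0 = None.
Proof. by case E: (P ord0) => [p|] //; have [] := HP E. Qed.

Lemma lam0 : ord0 \notin lam.
Proof. by rewrite -Hnr P0. Qed.

Lemma cntr0 : cntr 0 = 0.
Proof. by apply: eq_card0 => i. Qed.

Lemma cntrS v : v < n.+1 -> cntr v.+1 = cntr v + (P (inord v) == None).
Proof.
move=> Hv; rewrite /cntr (cardD1 (inord v)) inE inordK // ltnSn /= addnC; congr (_ + _).
apply: eq_card => i; rewrite !inE ltnS leq_eqVlt.
case: (boolP (i == inord v)) => [/eqP ->|Hi] /=; first by rewrite inordK // ltnn.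
have -> // : (val i == v) = false.
by apply/negbTE; apply: contra Hi => /eqP <-; rewrite inord_val.
Qed.

Lemma cntr_mono p q : p <= q -> cntr p <= cntr q.
Proof.
move=> Hpq; apply: subset_leq_card; apply/subsetP=> i; rewrite !inE.
by case/andP=> H ->; rewrite (leq_trans H Hpq).
Qed.

Lemma cntr_lt (p : 'I_n.+1) q : P p = None -> p < q -> cntr p < cntr q.
Proof.
move=> Hp Hpq; apply: leq_trans (cntr_mono Hpq).
by rewrite cntrS // inord_val Hp eqxx addn1.
Qed.

Lemma cntr_all : cntr n.+1 = n.+1 - m.
Proof.
have H1 : #|[pred i : 'I_n.+1 | i \in lam]| = m.
  by rewrite -Hs -(card_uniqP Hu); apply: eq_card.
have H2 := cardC [pred i : 'I_n.+1 | i \in lam].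
rewrite card_ord H1 in H2.
have H3 : cntr n.+1 = #|[predC [pred i : 'I_n.+1 | i \in lam]]|.
  apply: eq_card => i; rewrite !inE ltn_ord /= -Hnr; by case: (P i).
rewrite H3; move: H2; set c := #|_| => H2.
by rewrite -H2 addKn.
Qed.

Lemma cntr_root (p : 'I_n.+1) : P p = None -> cntr p <= n - m.
Proof.
move=> Hp; have := cntr_lt Hp (ltn_ord p); rewrite cntr_all; lia.
Qed.


Lemma node_lam (k : 'I_m) : node (nth ord0 lam k) = inr k.
Proof. by rewrite /node index_uniq ?Hs // valK. Qed.

Lemma node_nlam i : i \notin lam -> node i = inl (inord (cntr i)).
Proof. by move=> Hi; rewrite /node memNindex // Hs insubF // ltnn. Qed.

Lemma node_in p : p \in lam -> exists k : 'I_m, p = nth ord0 lam k /\ node p = inr k.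
Proof.
move=> Hp; have Hk : index p lam < m by rewrite -Hs index_mem.
exists (Ordinal Hk); rewrite /= nth_index //; split=> //.
by rewrite -{1}(nth_index ord0 Hp) (node_lam (Ordinal Hk)).
Qed.

Lemma node_inj : injective node.
Proof.
move=> p q; case: (boolP (p \in lam)) => Hp; case: (boolP (q \in lam)) => Hq.
- have [k [-> ->]] := node_in Hp; have [k' [-> ->]] := node_in Hq; by case=> ->.
- by have [k [_ ->]] := node_in Hp; rewrite (node_nlam Hq) => H; discriminate H.
- by have [k [_ ->]] := node_in Hq; rewrite (node_nlam Hp) => H; discriminate H.
rewrite (node_nlam Hp) (node_nlam Hq); case=> /(congr1 val) E.
have Rp : P p = None by apply/eqP; move: Hp; rewrite -Hnr negbK.
have Rq : P q = None by apply/eqP; move: Hq; rewrite -Hnr negbK.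
have Cp : cntr p < (n - m).+1 by rewrite ltnS; exact: cntr_root Rp.
have Cq : cntr q < (n - m).+1 by rewrite ltnS; exact: cntr_root Rq.
move: E; rewrite /= (inordK Cp) (inordK Cq) => E.
apply: val_inj; case: (ltngtP p q) => // H.
  by have := cntr_lt Rp H; rewrite E ltnn.
by have := cntr_lt Rq H; rewrite E ltnn.
Qed.

Lemma phiPL_k (k : 'I_m) : exists p, P (nth ord0 lam k) = Some p /\ phiPL k = node p.
Proof.
rewrite /phiPL ffunE.
have : P (nth ord0 lam k) != None by rewrite Hnr mem_nth // Hs.
case E: (P _) => [p|] // _; exists p; split=> //.
case: ifP => Hp; last by rewrite node_nlam // Hp.
have [k' [Ek' ->]] := node_in Hp; congr inr; apply: val_inj.
have Hk : index p lam < m by rewrite -Hs index_mem.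
by rewrite insubdK // Ek' index_uniq ?Hs.
Qed.

Lemma lam_par (k : 'I_m) : exists p, P (nth ord0 lam k) = Some p.
Proof. by have [p [H _]] := phiPL_k k; exists p. Qed.

Lemma rdyE v (vis : seq 'I_m) (Hv : 0 < v) (Hvis : forall k : 'I_m, (k \in vis) = (nth ord0 lam k < v))
  (k : 'I_m) p : P (nth ord0 lam k) = Some p ->
  rdy phiPL (cntr v).-1 vis k = (v <= nth ord0 lam k) && (p < v).
Proof.
move=> E; have [p' [E' Hk]] := phiPL_k k; move: E'; rewrite E => -[Ep]; subst p'.
rewrite /rdy Hk Hvis -leqNgt; congr andb.
case: (boolP (p \in lam)) => Hp.
  by have [k' [Ek' Nk']] := node_in Hp; rewrite Nk' Hvis -Ek'.
rewrite node_nlam //.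
have Rp : P p = None by apply/eqP; move: Hp; rewrite -Hnr negbK.
have H0 : 0 < cntr v := leq_ltn_trans (leq0n _) (cntr_lt P0 Hv).
have Cp : cntr p < (n - m).+1 by rewrite ltnS; exact: cntr_root Rp.
rewrite (inordK Cp).
case: (ltnP p v) => H.
  by have := cntr_lt Rp H; lia.
by have := cntr_mono H; lia.
Qed.

Lemma psA d : forall v (vis : seq 'I_m), v + d = n.+1 -> 0 < v ->
  (forall k : 'I_m, (k \in vis) = (nth ord0 lam k < v)) ->
  psearch phiPL d (cntr v).-1 vis = [seq node (inord i) | i <- iota v d].
Proof.
elim: d => [|d IH] v vis Hvd Hv Hvis; first by [].
have Hvn : v < n.+1 by lia.
set w : 'I_n.+1 := inord v.
have Ew : nat_of_ord w = v by rewrite /w inordK.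
rewrite psearchS /=.
case: (boolP (w \in lam)) => Hw.
  have [k0 [Ek0 Nk0]] := node_in Hw.
  have rdy0 : rdy phiPL (cntr v).-1 vis k0.
    have [p E] := lam_par k0; rewrite (rdyE Hv Hvis E) -Ek0 Ew leqnn /=.
    have [] := HP E; by rewrite -Ek0 Ew.
  have rdymin : forall k, rdy phiPL (cntr v).-1 vis k -> k0 <= k.
    move=> k; have [p E] := lam_par k; rewrite (rdyE Hv Hvis E) => /andP[H1 H2].
    case: (boolP (nth ord0 lam k == w)) => Hk.
      have : nth ord0 lam k == nth ord0 lam k0 by rewrite -Ek0.
      by rewrite nth_uniq ?Hs // => /eqP/val_inj ->.
    have Hwk : w < nth ord0 lam k.
      rewrite ltn_neqAle Ew H1 andbT; apply: contra Hk => /eqP H.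
      by apply/eqP/val_inj; rewrite /= -H.
    have Hpw : p < w by rewrite Ew.
    have /index_ltn := Ho (ltn_ord k) E Hpw Hwk.
    by rewrite Ek0 index_uniq ?Hs // => /ltnW.
  case: pickP => [k /andP[Hk /forallP Hmin]|Hnone]; last first.
    have := Hnone k0; rewrite rdy0 /=; case/negP; apply/forallP=> k'.
    by apply/implyP; apply: rdymin.
  have Ekk0 : k = k0.
    apply: val_inj; apply/eqP; rewrite eqn_leq rdymin // andbT.
    by have := Hmin k0; rewrite rdy0.
  rewrite Ekk0 -Nk0; congr (_ :: _).
  have -> : cntr v = cntr v.+1.
    rewrite (cntrS Hvn) -/w; case: eqP => [Hw0|_]; last by rewrite addn0.
    by move: Hw; rewrite -Hnr Hw0.
  apply: IH => //; first lia.
  move=> kk; rewrite inE Hvis; case: (kk =P k0) => [->|Hne] /=.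
    by rewrite -Ek0 Ew ltnSn.
  rewrite [in RHS]ltnS [in RHS]leq_eqVlt; case: eqP => [H|//]; exfalso; apply: Hne.
  have : nth ord0 lam kk == nth ord0 lam k0 by rewrite -Ek0; apply/eqP/val_inj; rewrite /= H.
  by rewrite nth_uniq ?Hs // => /eqP/val_inj.
have Rw : P w = None by apply/eqP; move: Hw; rewrite -Hnr negbK.
case: pickP => [k /andP[Hk _]|_].
  have [p E] := lam_par k; move: Hk; rewrite (rdyE Hv Hvis E) => /andP[H1 H2].
  have Hwk : w < nth ord0 lam k.
    rewrite ltn_neqAle Ew H1 andbT; apply/negP=> /eqP H.
    have : nth ord0 lam k = w by apply: val_inj; rewrite /= Ew.
    by move=> Ek; move: Hw; rewrite -Ek mem_nth // Hs.
  have Hpw : p < w by rewrite Ew.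
  have /mem_take := Ho (ltn_ord k) E Hpw Hwk.
  by rewrite (negbTE Hw).
have H0 : 0 < cntr v := leq_ltn_trans (leq0n _) (cntr_lt P0 Hv).
have Hc : cntr v.+1 = (cntr v).+1 by rewrite cntrS // -/w Rw addn1.
rewrite node_nlam // Ew prednK //; congr (_ :: _).
rewrite -[cntr v]/((cntr v).+1.-1) -Hc; apply: IH => //; first lia.
move=> k; rewrite Hvis [in RHS]ltnS [in RHS]leq_eqVlt; case: eqP => [H|//]; exfalso.
have Ewk : w = nth ord0 lam k by apply: val_inj; rewrite /= Ew H.
by move: Hw; rewrite Ewk mem_nth // Hs.
Qed.


Lemma inord0E : inord 0 = ord0 :> 'I_n.+1.
Proof. by apply: val_inj; rewrite /= inordK. Qed.

Lemma cntr1 : cntr 1 = 1.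
Proof. by rewrite cntrS // cntr0 inord0E P0. Qed.

Lemma porder_phi : porder phiPL = [seq node (inord i) | i <- iota 1 n].
Proof.
rewrite /porder.
rewrite [X in psearch _ _ X](_ : 0 = (cntr 1).-1); last by rewrite cntr1.
apply: (psA (v := 1)) => //.
move=> k; rewrite in_nil ltnS leqn0; apply/esym/negbTE; apply/negP=> /eqP H.
have : nth ord0 lam k = ord0 by apply: val_inj.
by move=> E; move: lam0; rewrite -E mem_nth // Hs.
Qed.

Definition ordp := [seq node (inord i) | i <- iota 1 n].

Lemma ordp_uniq : uniq ordp.
Proof.
rewrite /ordp (map_comp node inord) map_inj_uniq; last exact: node_inj.
rewrite map_inj_in_uniq ?iota_uniq // => x y; rewrite !mem_iota => /andP[_ Hx] /andP[_ Hy].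
by move/(congr1 val); rewrite /= !inordK // ltnS -ltnS -(add1n n).
Qed.

Lemma nth_ordp (i : 'I_n.+1) : 0 < i -> nth (inl ord0) ordp i.-1 = node i.
Proof.
move=> Hi; rewrite /ordp (nth_map 0); last by rewrite size_iota; have := ltn_ord i; lia.
rewrite nth_iota; last by have := ltn_ord i; lia.
by rewrite add1n prednK // inord_val.
Qed.

Lemma node0 : node ord0 = inl ord0.
Proof. rewrite node_nlam ?lam0 //; congr inl; apply: val_inj; rewrite /= inordK; [exact: cntr0 | by rewrite cntr0]. Qed.

Lemma lab_node (p : 'I_n.+1) :
  (if node p == inl ord0 then 0 else (index (node p) ordp).+1) = p.
Proof.
case: (posnP p) => Hp.
  have -> : p = ord0 by apply: val_inj.
  by rewrite node0 eqxx.
have -> : (node p == inl ord0) = false.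
  case: (boolP (p \in lam)) => Hl.
    by have [k [_ ->]] := node_in Hl.
  have Rp : P p = None by apply/eqP; move: Hl; rewrite -Hnr negbK.
  have Cp : cntr p < (n - m).+1 by rewrite ltnS; exact: cntr_root Rp.
  have C1 : 0 < cntr p := leq_ltn_trans (leq0n _) (cntr_lt P0 Hp).
  rewrite node_nlam //; apply/negbTE/eqP; case=> /(congr1 val).
  by rewrite /= inordK // => H; rewrite H in C1.
rewrite -(nth_ordp Hp) index_uniq ?ordp_uniq ?prednK //.
by rewrite /ordp size_map size_iota; have := ltn_ord p; lia.
Qed.

Lemma prio_phi : prio_forest phiPL = P.
Proof.
apply/ffunP=> i; rewrite /prio_forest ffunE porder_phi -/ordp.
case: (posnP i) => Hi.
  have Ei : i = ord0 by apply: val_inj.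
  by rewrite Ei P0.
rewrite -[\val i]/(nat_of_ord i) nth_ordp //.
case: (boolP (i \in lam)) => Hl.
  have [k [Ek ->]] := node_in Hl.
  have [p [E ->]] := phiPL_k k.
  by rewrite lab_node inord_val Ek E.
rewrite node_nlam //; apply/esym/eqP; move: Hl; by rewrite -Hnr negbK.
Qed.

Lemma trav_phi : prio_traversal phiPL = pinv m lam.
Proof.
rewrite /prio_traversal porder_phi /pinv -!map_comp; apply: eq_map => i /=.
rewrite /node; case: (boolP (inord i \in lam)) => Hj; last by rewrite memNindex // Hs insubF ?ltnn.
by case: insub.
Qed.

Definition rank (k : 'I_m) := #|[pred k' : 'I_m | nth ord0 lam k' < nth ord0 lam k]|.

Lemma iter_inl t r : iter t (ostep phiPL) (inl r) = inl r.
Proof. by elim: t => //= t ->. Qed.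

Lemma rank_lt k : rank k < m.
Proof.
have H : rank k <= #|predC1 k|.
  apply: subset_leq_card; apply/subsetP=> x; rewrite !inE; apply: contraTneq => ->.
  by rewrite ltnn.
rewrite cardC1 card_ord in H; apply: leq_ltn_trans H _.
by rewrite prednK // (leq_ltn_trans (leq0n k) (ltn_ord k)).
Qed.

Lemma oforest_phi : is_oforest phiPL.
Proof.
have claim : forall t (k : 'I_m), rank k < t -> exists r, iter t (ostep phiPL) (inr k) = inl r.
  elim=> [|t IH] k //; rewrite ltnS => Hk.
  rewrite iterSr /=.
  have [p [E ->]] := phiPL_k k.
  case: (boolP (p \in lam)) => Hl; last by rewrite node_nlam // iter_inl; eexists.
  have [k' [Ek' ->]] := node_in Hl.
  apply: IH; apply: leq_trans Hk; apply: proper_card; rewrite properE; apply/andP; split.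
    apply/subsetP=> x; rewrite !inE => Hx; apply: ltn_trans Hx _.
    by rewrite -Ek'; have [] := HP E.
  apply/subsetPn; exists k'; rewrite !inE ?ltnn //.
  by rewrite -Ek'; have [] := HP E.
apply/forallP=> k; have [r ->] := claim m k (rank_lt k); by [].
Qed.


Definition chain_of := [seq restr P (take t lam) | t <- iota 0 m.+1].

Lemma nth_chain_of t : t <= m -> nth (bot_forest n) chain_of t = restr P (take t lam).
Proof. by move=> Ht; rewrite /chain_of (nth_map 0) ?size_iota ?ltnS // nth_iota. Qed.

Lemma restr_LP t : LP (restr P (take t lam)).
Proof.
move=> i p; rewrite ffunE; case: ifP => // Hi E.
have [Hpi HPr] := HP E; split=> // r Hpr Hri.
have Hil : i \in lam := mem_take Hi.
have Hk : index i lam < m by rewrite -Hs index_mem.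
have Ei : nth ord0 lam (index i lam) = i by rewrite nth_index.
have := Ho Hk; rewrite Ei => /(_ p E r Hpr Hri) Hr.
have Hrl : r \in lam := mem_take Hr.
rewrite ffunE (in_take _ Hrl) (leq_trans (index_ltn Hr)) ?(ltnW (index_ltn Hi)) //.
by apply/eqP; rewrite Hnr.
Qed.

Section Step.
Variable k : nat.
Hypothesis Hk : k < m.
Let A := restr P (take k lam).
Let B := restr P (take k.+1 lam).
Let l := nth ord0 lam k.

Lemma lnotin : l \notin take k lam.
Proof.
have Hl : l \in lam by rewrite mem_nth ?Hs.
by rewrite (in_take _ Hl) /l index_uniq ?Hs ?ltnn.
Qed.

Lemma takeS : take k.+1 lam = rcons (take k lam) l.
Proof. by rewrite (take_nth ord0) ?Hs. Qed.

Lemma Al : A l = None.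
Proof. by rewrite /A ffunE (negbTE lnotin). Qed.

Lemma Bl : B l <> None.
Proof. by rewrite /B ffunE takeS mem_rcons mem_head; apply/eqP; rewrite Hnr mem_nth ?Hs. Qed.

Lemma ABj j : j != l -> A j = B j.
Proof. by move=> Hj; rewrite /A /B !ffunE takeS mem_rcons in_cons (negbTE Hj). Qed.

Lemma covers_step : covers A B.
Proof.
apply/and5P; split.
- exact/LP_prio/restr_LP.
- exact/LP_prio/restr_LP.
- apply/leP=> i Hi; case: (i =P l) => [Ei|/eqP Hne]; first by rewrite Ei Al in Hi.
  by rewrite ABj.
- apply/eqP=> /ffunP/(_ l); rewrite -/A -/B Al; exact: nesym Bl.
apply/existsPn=> R; apply/negP; case/and5P=> _ /leP H1 /leP H2 HRA HRB.
have Rj : forall j, j != l -> R j = A j.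
  move=> j Hj; case E: (A j) => [a|].
    by rewrite H1 // E.
  case E': (R j) => [r|] //; have := H2 j; rewrite E' -(ABj Hj) E => /(_ ltac:(by [])) //.
case E: (R l) => [r|].
  move/negP: HRB; apply; apply/eqP/ffunP=> j; case: (j =P l) => [->|/eqP Hj].
    by rewrite H2 // E.
  by rewrite Rj // ABj.
move/negP: HRA; apply; apply/eqP/ffunP=> j; case: (j =P l) => [->|/eqP Hj].
  by rewrite E Al.
by rewrite Rj.
Qed.

Lemma edge_step : edge_label A B = l.
Proof. apply: edge_labelE; [exact: Al | exact: Bl | exact: ABj]. Qed.

End Step.

Lemma chain_of_chain : is_chain n m chain_of.
Proof.
apply/and3P; split.
- by rewrite /chain_of size_map size_iota.
- rewrite nth_chain_of // take0; apply/eqP/ffunP=> i; by rewrite !ffunE.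
apply/forallP=> k; rewrite !nth_chain_of ?(ltnW (ltn_ord k)) ?ltn_ord //.
exact: covers_step.
Qed.

Lemma chain_of_top : chain_top m chain_of = P.
Proof.
rewrite /chain_top nth_chain_of // take_oversize ?Hs //.
apply/ffunP=> i; rewrite ffunE; case: ifP => // Hi.
by apply/esym/eqP; move/negbT: Hi; rewrite -Hnr negbK.
Qed.

Lemma chain_of_JH : JH m chain_of = lam.
Proof.
apply: (@eq_from_nth _ ord0); first by rewrite /JH size_map size_iota.
move=> i; rewrite /JH size_map size_iota => Hi.
rewrite (nth_map 0) ?size_iota // nth_iota // add0n.
by rewrite !nth_chain_of ?(ltnW Hi) // edge_step.
Qed.

End Data.

Definition Good n m (P : forest n) (lam : seq 'I_n.+1) :=
  [/\ LP P, size lam = m, uniq lam, (forall i, (P i != None) = (i \in lam)) &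
   (forall k, k < m -> forall p, P (nth ord0 lam k) = Some p ->
        forall r : 'I_n.+1, p < r -> r < nth ord0 lam k -> r \in take k lam)].

Section GoodL.
Variables (n m : nat) (P : forest n) (lam : seq 'I_n.+1).
Hypothesis HG : Good m P lam.

Lemma G_prio : prio_forest (phiPL m P lam) = P.
Proof. by case: HG => *; apply: prio_phi. Qed.
Lemma G_trav : prio_traversal (phiPL m P lam) = pinv m lam.
Proof. by case: HG => *; apply: trav_phi. Qed.
Lemma G_of : is_oforest (phiPL m P lam).
Proof. by case: HG => *; apply: oforest_phi. Qed.
Lemma G_chain : is_chain n m (chain_of m P lam).
Proof. by case: HG => *; apply: chain_of_chain. Qed.
Lemma G_top : chain_top m (chain_of m P lam) = P.
Proof. by case: HG => *; apply: chain_of_top. Qed.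
Lemma G_JH : JH m (chain_of m P lam) = lam.
Proof. by case: HG => *; apply: chain_of_JH. Qed.
Lemma G_lam0 : ord0 \notin lam.
Proof. by case: HG => *; apply: (lam0 (P := P)). Qed.
End GoodL.

Lemma phiE n m C : phi n m C = phiPL m (chain_top m C) (JH m C).
Proof. by []. Qed.

Lemma le_refl n (P : forest n) : le_forest P P.
Proof. by apply/leP. Qed.

Section ChainData.
Variables (n m : nat) (C : seq (forest n)).
Hypothesis HC : is_chain n m C.
Let Pk k := nth (bot_forest n) C k.
Let top := chain_top m C.
Let lam := JH m C.

Lemma C_size : size C = m.+1.
Proof. by case/and3P: HC => /eqP. Qed.
Lemma C_0 : Pk 0 = bot_forest n.
Proof. by case/and3P: HC => _ /eqP. Qed.
Lemma C_cov k : k < m -> covers (Pk k) (Pk k.+1).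
Proof. by move=> Hk; case/and3P: HC => _ _ /forallP/(_ (Ordinal Hk)). Qed.
Lemma lam_size : size lam = m.
Proof. by rewrite /lam /JH size_map size_iota. Qed.
Lemma lam_nth k : k < m -> nth ord0 lam k = edge_label (Pk k) (Pk k.+1).
Proof. by move=> Hk; rewrite /lam /JH (nth_map 0) ?size_iota // nth_iota. Qed.

Lemma C_le k : k <= m -> le_forest (Pk k) top.
Proof.
move=> Hk; have : k + (m - k) = m by lia.
move: (m - k) => d0; elim: d0 k {Hk} => [|d IH] k Hkd.
  by rewrite addn0 in Hkd; rewrite Hkd; apply: le_refl.
apply: le_trans (IH k.+1 _); last by lia.
have Hkm : k < m by lia.
by case/and5P: (C_cov Hkm).
Qed.

Lemma C_LP k : k <= m -> LP (Pk k).
Proof.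
case: k => [|k] Hk.
  rewrite C_0 => i p; by rewrite ffunE.
by case/and5P: (C_cov Hk) => _ /prioE.
Qed.

Lemma C_restr k : k <= m -> Pk k = restr top (take k lam).
Proof.
elim: k => [|k IH] Hk.
  by rewrite C_0 take0; apply/ffunP=> i; rewrite !ffunE.
have [i [H1 H2 H3]] := cover_one (C_cov Hk).
have Hl : nth ord0 lam k = i by rewrite lam_nth // (edge_labelE H1 H2 H3).
rewrite (take_nth ord0) ?lam_size // Hl.
apply/ffunP=> j; rewrite ffunE mem_rcons in_cons.
case: (j =P i) => [->|/eqP Hj] /=.
  by have /leP := C_le Hk; move=> /(_ i H2) ->.
by rewrite -H3 // IH ?(ltnW Hk) // ffunE.
Qed.

Lemma top_lam (k : nat) : k < m -> top (nth ord0 lam k) <> None /\ nth ord0 lam k \notin take k lam.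
Proof.
move=> Hk; have [i [H1 H2 H3]] := cover_one (C_cov Hk).
have Hl : nth ord0 lam k = i by rewrite lam_nth // (edge_labelE H1 H2 H3).
have Ht : top i = Pk k.+1 i by have /leP := C_le Hk; move=> /(_ i H2) ->.
rewrite Hl Ht; split=> //.
apply/negP=> Hin; move: H1; rewrite C_restr ?(ltnW Hk) // ffunE Hin Ht; exact: H2.
Qed.

Lemma C_good : Good m top lam.
Proof.
have Htop : top = restr top lam.
  by rewrite {1}/top /chain_top -/(Pk m) C_restr // take_oversize ?lam_size.
split.
- exact: C_LP.
- exact: lam_size.
- have : forall k, k <= m -> uniq (take k lam).
    elim=> [|k IH] Hk; first by rewrite take0.
    rewrite (take_nth ord0) ?lam_size // rcons_uniq IH ?(ltnW Hk) // andbT.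
    by have [] := top_lam Hk.
  by move/(_ m (leqnn m)); rewrite take_oversize ?lam_size.
- move=> i; apply/idP/idP=> [Hi|Hi].
    rewrite Htop ffunE in Hi; by case: ifP Hi.
  have Hk : index i lam < m by rewrite -lam_size index_mem.
  have [H _] := top_lam Hk; rewrite nth_index // in H; exact/eqP.
move=> k Hk p E r Hpr Hrk.
have Hk' := Hk; rewrite -ltnS in Hk'.
have HL := C_LP Hk; rewrite C_restr // in HL.
have E' : restr top (take k.+1 lam) (nth ord0 lam k) = Some p.
  by rewrite ffunE (take_nth ord0) ?lam_size // mem_rcons mem_head.
have [_ /(_ r Hpr Hrk)] := HL _ _ E'.
rewrite ffunE (take_nth ord0) ?lam_size // mem_rcons in_cons.
case: (r =P nth ord0 lam k) => [Er|_] /=; first by rewrite Er ltnn in Hrk.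
by case: ifP.
Qed.

Lemma C_eq : C = chain_of m top lam.
Proof.
apply: (@eq_from_nth _ (bot_forest n)); first by rewrite C_size /chain_of size_map size_iota.
move=> t; rewrite C_size ltnS => Ht.
by rewrite nth_chain_of // -C_restr.
Qed.

End ChainData.

Section Search.
Variables (n m : nat) (F : oforest n m).
Hypotheses (hmn : m <= n) (hF : is_oforest F).

Definition isinl (x : onode n m) : bool := if x is inl _ then true else false.
Definition reached (j : nat) (vis : seq 'I_m) (x : onode n m) : bool :=
  match x with inl r => r <= j | inr k => k \in vis end.

Lemma rdyR j vis k : rdy F j vis k = (k \notin vis) && reached j vis (F k).
Proof. by []. Qed.

Definition Inv d j (vis : seq 'I_m) := [/\ uniq vis, j <= n - m & j + size vis + d = n].

Lemma vis_size (vis : seq 'I_m) : uniq vis -> size vis <= m.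
Proof.
move=> Hu; have := @uniq_leq_size _ vis (enum 'I_m) Hu; rewrite size_enum_ord; apply.
by move=> x _; rewrite mem_enum.
Qed.

Lemma all_in (vis : seq 'I_m) : uniq vis -> size vis = m -> forall k, k \in vis.
Proof.
move=> Hu Hs k; apply/negPn/negP=> Hk.
have := vis_size (vis := k :: vis); rewrite /= Hk Hu Hs => /(_ isT); by rewrite ltnn.
Qed.

Lemma iter_inl' t r : iter t (ostep F) (inl r) = inl r.
Proof. by elim: t => //= t ->. Qed.

Lemma iter_reached j vis : (forall k, ~~ rdy F j vis k) ->
  forall t k, reached j vis (iter t (ostep F) (inr k)) -> k \in vis.
Proof.
move=> Hno; elim=> [|t IH] k; first by [].
rewrite iterSr /= => H.
apply/negPn/negP=> Hk; move: (Hno k); rewrite rdyR Hk /=; apply/negPn.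
case E: (F k) => [r|k'] /=; rewrite E in H.
  by rewrite negbK; rewrite iter_inl' in H.
rewrite negbK; exact: IH H.
Qed.

Lemma noread d j vis : Inv d.+1 j vis -> (forall k, ~~ rdy F j vis k) -> j < n - m.
Proof.
case=> Hu Hj Hs Hno; rewrite ltn_neqAle Hj andbT; apply/negP=> /eqP Ej.
have Hall : forall k, k \in vis.
  move=> k; apply: (iter_reached Hno (t := m)); move/forallP: hF => /(_ k).
  case: (iter m (ostep F) (inr k)) => [r|] //= _.
  by rewrite Ej -ltnS ltn_ord.
have : m <= size vis.
  have := @uniq_leq_size _ (enum 'I_m) vis (enum_uniq _); rewrite size_enum_ord; apply.
  by move=> x _; apply: Hall.
lia.
Qed.

Lemma none_rdy j vis :
  (forall k, (rdy F j vis k && [forall k', rdy F j vis k' ==> (k <= k')]) = false) ->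
  forall k, ~~ rdy F j vis k.
Proof.
move=> Hn k; apply/negP=> Hk.
case: (@arg_minnP _ k (rdy F j vis) (fun x : 'I_m => val x) Hk) => k0 H0 Hmin.
have := Hn k0; rewrite H0 /=; move/negbT/negP; apply; apply/forallP=> k'.
by apply/implyP=> /Hmin.
Qed.

Lemma step d j vis : Inv d.+1 j vis -> exists x j' vis',
  [/\ psearch F d.+1 j vis = x :: psearch F d j' vis', Inv d j' vis',
   (forall y, reached j' vis' y = reached j vis y || (y == x)),
   (forall k, (k \in vis') = (k \in vis) || (x == inr k)) &
   j' = j + isinl x /\
   match x with
   | inr k0 => rdy F j vis k0 /\ (forall k, rdy F j vis k -> k0 <= k)
   | inl r => (forall k, ~~ rdy F j vis k) /\ val r = j.+1
   end].
Proof.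
move=> HI; have [Hu Hj Hs] := HI; rewrite psearchS.
case: pickP => [k0 /andP[Hk0 /forallP Hmin]|Hnone].
  exists (inr k0), j, (k0 :: vis); split=> //.
  - move: Hk0; rewrite rdyR => /andP[Hk0 _].
    by split; rewrite /= ?Hk0 ?Hu //; rewrite /= in Hs; lia.
  - case=> [r|k] /=; first by rewrite orbF.
    by rewrite in_cons orbC.
  - by move=> k; rewrite in_cons orbC eq_sym.
  - split; first by rewrite addn0.
    split=> // k Hk; by have := Hmin k; rewrite Hk.
have Hno := none_rdy Hnone.
have Hlt := noread HI Hno.
exists (inl (inord j.+1)), j.+1, vis; split=> //.
- by split=> //; lia.
- case=> [r|k] /=; last by rewrite orbF.
  have E : (inl r == inl (inord j.+1) :> onode n m) = (val r == j.+1).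
    apply/eqP/eqP => [[->]|H]; first by apply: inordK; lia.
    congr inl; apply: val_inj; rewrite /= H; symmetry; apply: inordK; lia.
  by rewrite E [in LHS]leq_eqVlt ltnS orbC.
- by move=> k; rewrite orbF.
- split; first by rewrite addn1.
  by split=> //; apply: inordK; lia.
Qed.

Lemma ps_size d j vis : size (psearch F d j vis) = d.
Proof.
elim: d j vis => //= d IH j vis.
by case: pickP => [k _|_] /=; rewrite IH.
Qed.

Lemma ps_mem d : forall j vis, Inv d j vis ->
  forall k, (inr k \in psearch F d j vis) = (k \notin vis).
Proof.
elim: d => [|d IH] j vis HI k.
  case: HI => Hu Hj Hs; rewrite in_nil all_in //.
  by have := vis_size Hu; rewrite addn0 in Hs; lia.
have [x [j' [vis' [-> HI' Hr Hv [Hj' Hx]]]]] := step HI.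
rewrite in_cons IH // Hv negb_or eq_sym.
case: x Hx {Hr Hv Hj'} => [r|k0] /=; first by rewrite andbT.
move=> [Hk0 _]; case: (k0 =P k) => [<-|Hne].
  by rewrite eqxx /=; move: Hk0; rewrite rdyR => /andP[-> _].
have -> : (inr k0 == inr k :> onode n m) = false by apply/eqP => -[E]; apply: Hne; rewrite E.
by rewrite /= andbT.
Qed.

Lemma ps_inl d : forall j vis, Inv d j vis -> forall t r,
  t < d -> nth (inl ord0) (psearch F d j vis) t = inl r ->
  val r = j + 1 + count isinl (take t (psearch F d j vis)).
Proof.
elim: d => [|d IH] j vis HI t r //.
have [x [j' [vis' [-> HI' Hr Hv [Hj' Hx]]]]] := step HI.
case: t => [|t] /= Ht.
  move=> Ex; rewrite Ex in Hx; case: Hx => _ ->; lia.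
move=> E; rewrite (IH _ _ HI' _ _ Ht E) Hj'; lia.
Qed.

Lemma ps_uniq d : forall j vis, Inv d j vis -> uniq (psearch F d j vis).
Proof.
elim: d => [|d IH] j vis HI //.
have [x [j' [vis' [-> HI' Hr Hv [Hj' Hx]]]]] := step HI.
rewrite /= IH // andbT.
case: x Hx Hv Hj' {Hr} => [r|k0] /= Hx Hv Hj'.
  apply/negP=> Hin.
  have Ht : index (inl r) (psearch F d j' vis') < d by have := index_mem (inl r) (psearch F d j' vis'); rewrite ps_size Hin.
  move: (ps_inl HI' Ht (nth_index _ Hin)); case: Hx => _ H2; rewrite -[\val r]/(nat_of_ord r) H2 => H1; lia.
by rewrite ps_mem // Hv eqxx orbT.
Qed.

Lemma reached_x d j vis : Inv d.+1 j vis -> forall x j' vis',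
  psearch F d.+1 j vis = x :: psearch F d j' vis' ->
  (forall y, reached j' vis' y = reached j vis y || (y == x)) ->
  reached j' vis' x.
Proof. by move=> _ x j' vis' _ ->; rewrite eqxx orbT. Qed.

Lemma ps_par d : forall j vis, Inv d j vis -> forall t k,
  t < d -> nth (inl ord0) (psearch F d j vis) t = inr k ->
  reached j vis (F k) || (F k \in take t (psearch F d j vis)).
Proof.
elim: d => [|d IH] j vis HI t k //.
have [x [j' [vis' [-> HI' Hr Hv [Hj' Hx]]]]] := step HI.
case: t => [|t] /= Ht.
  move=> Ex; rewrite Ex in Hx; case: Hx => H _; move: H; rewrite rdyR => /andP[_ ->].
  by [].
move=> E; have := IH _ _ HI' _ _ Ht E; rewrite Hr in_cons.
by case/orP=> [/orP[->|->]|->]; rewrite ?orbT.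
Qed.

Lemma ps_ord d : forall j vis, Inv d j vis -> forall t u k,
  t < d -> nth (inl ord0) (psearch F d j vis) t = inr k -> u < t ->
  reached j vis (F k) || (F k \in take u (psearch F d j vis)) ->
  exists k2, nth (inl ord0) (psearch F d j vis) u = inr k2 /\ k2 < k.
Proof.
elim: d => [|d IH] j vis HI t u k //.
have [x [j' [vis' [-> HI' Hr Hv [Hj' Hx]]]]] := step HI.
case: t => [|t] //= Ht Ek.
have Hkin : inr k \in psearch F d j' vis' by rewrite -Ek mem_nth // ps_size.
move: Hkin; rewrite (ps_mem HI') Hv negb_or => /andP[Hkv Hxk].
case: u => [|u] /= Hu.
  rewrite orbF => Hreach.
  have Hrk : rdy F j vis k by rewrite rdyR Hkv.
  case: x Hx Hxk {Hr Hv Hj'} => [r|k0] Hx Hxk.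
    by case: Hx => /(_ k); rewrite Hrk.
  case: Hx => _ /(_ k Hrk) Hle; exists k0; split=> //.
  by rewrite ltn_neqAle Hle andbT; apply: contra Hxk => /eqP/val_inj ->.
rewrite in_cons => H; apply: (IH _ _ HI' t) => //.
rewrite Hr; case/orP: H => [->|/orP[/eqP ->|->]]; by rewrite ?eqxx ?orbT.
Qed.

End Search.

Section Surj.
Variables (n m : nat) (F : oforest n m).
Hypotheses (hmn : m <= n) (hF : is_oforest F).

Let ord := porder F.
Let HI0 : Inv n n 0 (@nil 'I_m).
Proof. by split=> //; rewrite add0n. Qed.

Definition lab (x : onode n m) := if x == inl ord0 then 0 else (index x ord).+1.
Definition pos (k : 'I_m) := (index (inr k) ord).+1.
Definition lamk (k : 'I_m) : 'I_n.+1 := inord (pos k).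
Definition flam := [seq lamk k | k <- enum 'I_m].
Definition PF := prio_forest F.

Lemma ord_size : size ord = n.
Proof. exact: ps_size. Qed.
Lemma ord_uniq : uniq ord.
Proof. exact: ps_uniq HI0. Qed.
Lemma ord_mem k : inr k \in ord.
Proof. by rewrite /ord /porder (ps_mem hmn hF HI0). Qed.
Lemma idx_lt x : x \in ord -> index x ord < n.
Proof. by move=> Hx; have := index_mem x ord; rewrite Hx ord_size. Qed.
Lemma pos_le k : pos k <= n.
Proof. exact: idx_lt (ord_mem k). Qed.
Lemma lamk_val k : nat_of_ord (lamk k) = pos k.
Proof. by rewrite /lamk inordK // ltnS pos_le. Qed.
Lemma nth_pos k : nth (inl ord0) ord (pos k).-1 = inr k.
Proof. by rewrite /pos /= nth_index ?ord_mem. Qed.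

Lemma PF_E (i : 'I_n.+1) : PF i = if nat_of_ord i == 0 then None else
  match nth (inl ord0) ord (nat_of_ord i).-1 with
  | inr k => Some (inord (lab (F k)))
  | inl _ => None end.
Proof. by rewrite /PF /prio_forest ffunE; case: ifP. Qed.

Lemma lab_lt k : lab (F k) < pos k.
Proof.
have Ht : index (inr k) ord < n := idx_lt (ord_mem k).
have := ps_par hmn hF HI0 Ht (nth_index _ (ord_mem k)).
rewrite -/ord /lab /pos; case E: (F k) => [r|k'] /=.
  case/orP=> [Hr|Hin].
    have -> : r = ord0 by apply: val_inj; move: Hr; rewrite /= leqn0 => /eqP.
    by rewrite eqxx.
  by case: ifP => // _; rewrite ltnS; apply: index_ltn.
by move=> Hin; rewrite ltnS; apply: index_ltn.
Qed.

Lemma lab_le k : lab (F k) < n.+1.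
Proof. by rewrite ltnS; apply: leq_trans (ltnW (lab_lt k)) (pos_le k). Qed.

Lemma PF_lamk k : PF (lamk k) = Some (inord (lab (F k))).
Proof.
rewrite PF_E lamk_val /pos /= nth_index ?ord_mem //.
Qed.

Lemma pos_of_nth u k : u < n -> nth (inl ord0) ord u = inr k -> lamk k = inord u.+1.
Proof.
move=> Hu E; rewrite /lamk /pos; congr inord; congr S.
by rewrite -E index_uniq ?ord_size ?ord_uniq.
Qed.

Lemma PF_some i p : PF i = Some p -> exists k, i = lamk k /\ p = inord (lab (F k)).
Proof.
rewrite PF_E; case: eqP => // Hi.
case E: (nth _ _ _) => [r|k] // [<-]; exists k; split=> //.
rewrite (pos_of_nth _ E); last by have := ltn_ord i; lia.
apply: val_inj; rewrite /= inordK prednK //; lia.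
Qed.

Lemma between k (r : 'I_n.+1) : lab (F k) < r -> r < pos k ->
  exists k2, r = lamk k2 /\ k2 < k.
Proof.
move=> H1 H2.
set t := index (inr k) ord.
have Ht : t < n := idx_lt (ord_mem k).
have Hu : r.-1 < t by rewrite /pos -/t in H2; lia.
have Hc : reached 0 [::] (F k) || (F k \in take r.-1 ord).
  have := ps_par hmn hF HI0 Ht (nth_index _ (ord_mem k)); rewrite -/ord -/t.
  case/orP=> [->//|Hin].
  case: (boolP (F k == inl ord0)) => Hk0; first by rewrite (eqP Hk0).
  apply/orP; right.
  have Hin' : F k \in ord := mem_take Hin.
  by rewrite in_take // ; move: H1; rewrite /lab (negbTE Hk0); lia.
have [k2 [E Hk2]] := ps_ord hmn hF HI0 Ht (nth_index _ (ord_mem k)) Hu Hc.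
exists k2; split=> //; rewrite (pos_of_nth _ E); last by lia.
apply: val_inj; rewrite /= inordK prednK //; lia.
Qed.

Lemma lamk_inj : injective lamk.
Proof.
move=> k k' /(congr1 val); rewrite /= !lamk_val /pos => -[E].
have : inr k = inr k' :> onode n m by apply: (index_inj (inl ord0)) E; apply: ord_mem.
by case.
Qed.

Lemma nth_flam (k : 'I_m) : nth ord0 flam k = lamk k.
Proof. by rewrite /flam (nth_map k) ?size_enum_ord ?ltn_ord // nth_ord_enum. Qed.

Lemma flam_size : size flam = m.
Proof. by rewrite /flam size_map size_enum_ord. Qed.

Lemma lab_val k : nat_of_ord (inord (lab (F k)) : 'I_n.+1) = lab (F k).
Proof. by rewrite inordK // lab_le. Qed.

Lemma F_good : Good m PF flam.
Proof.
split.
- move=> i p /PF_some [k [-> ->]]; split.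
    by rewrite lab_val lamk_val lab_lt.
  move=> r; rewrite lab_val lamk_val => H1 H2.
  have [k2 [-> _]] := between H1 H2; by rewrite PF_lamk.
- exact: flam_size.
- by rewrite /flam map_inj_uniq ?enum_uniq //; apply: lamk_inj.
- move=> i; apply/idP/idP.
    case E: (PF i) => [p|] // _; have [k [-> _]] := PF_some E.
    by apply: map_f; rewrite mem_enum.
  by case/mapP=> k _ ->; rewrite PF_lamk.
move=> k Hk p; rewrite (nth_flam (Ordinal Hk)) PF_lamk => -[<-] r.
rewrite lab_val lamk_val => H1 H2.
have [k2 [-> Hk2]] := between H1 H2.
rewrite /flam -map_take; apply: map_f.
by rewrite in_take ?mem_enum // index_enum_ord.
Qed.

Lemma cntr_ord u : u < n -> cntr PF u.+1 = 1 + count (@isinl n m) (take u ord).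
Proof.
elim: u => [|u IH] Hu.
  rewrite cntrS // cntr0 take0 PF_E inordK //.
rewrite cntrS; last by lia.
rewrite IH; last by lia.
rewrite (take_nth (inl ord0)); last by rewrite ord_size; lia.
rewrite -cats1 count_cat PF_E inordK; last by lia.
rewrite /= -addnA; congr (_ + (_ + _)).
by case: (nth _ _ _) => [r|k]; rewrite /= ?addn0.
Qed.

Lemma phiPL_F : phiPL m PF flam = F.
Proof.
have [HP Hs Hu Hnr Ho] := F_good.
apply/ffunP=> k.
have [p [E ->]] := phiPL_k Hs Hu Hnr k.
move: E; rewrite nth_flam PF_lamk => -[<-].
case E: (F k) => [r|k'].
  case: (r =P ord0) => [Er|Hr].
    rewrite /lab Er eqxx (_ : inord 0 = ord0); last by apply: val_inj; rewrite /= inordK.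
    exact: node0 HP Hs Hnr.
  have Ht := idx_lt (ord_mem k).
  have := ps_par hmn hF HI0 Ht (nth_index _ (ord_mem k)); rewrite E /= leqn0.
  have -> : (nat_of_ord r == 0) = false.
    by apply/negbTE; apply: contra_not_neq Hr => H; apply: val_inj; rewrite /= H.
  move=> /= Hin.
  have Hin' : inl r \in ord := mem_take Hin.
  set u := index (inl r) ord.
  have Hu' : u < n := idx_lt Hin'.
  have Hlab : lab (inl r) = u.+1.
    rewrite /lab ifF //; apply/eqP=> -[Er]; exact: Hr Er.
  rewrite Hlab.
  have Enth : nth (inl ord0) ord u = inl r by rewrite nth_index.
  have Hpn : (inord u.+1 : 'I_n.+1) \notin flam.
    rewrite -Hnr negbK PF_E inordK //= Enth //.
  rewrite (node_nlam PF Hs Hpn); congr inl; apply: val_inj.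
  have Ec : cntr PF (inord u.+1 : 'I_n.+1) = cntr PF u.+1 by rewrite inordK.
  have Hr1 : cntr PF u.+1 = nat_of_ord r.
    rewrite cntr_ord //; have := ps_inl hmn hF HI0 Hu' Enth; rewrite -/ord => ->; by rewrite add0n.
  by rewrite Ec Hr1 /= inordK ?ltn_ord.
rewrite /lab (_ : (inr k' == inl ord0 :> onode n m) = false) // -/(pos k') -(lamk_val k') inord_val -nth_flam.
exact (node_lam PF Hs Hu k').
Qed.

End Surj.

Lemma omap_insub m (x : nat) : omap val (insub x : option 'I_m) = if x < m then Some x else None.
Proof. case: insubP => [u Hx Eu|Hx] /=; [by rewrite Hx -Eu | by rewrite (negbTE Hx)]. Qed.

Lemma pinv_inj n m (l1 l2 : seq 'I_n.+1) : size l1 = m -> size l2 = m -> uniq l1 ->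
  ord0 \notin l1 -> pinv m l1 = pinv m l2 -> l1 = l2.
Proof.
move=> Hs1 Hs2 Hu H0 Heq; apply: (@eq_from_nth _ ord0); first by rewrite Hs1 Hs2.
move=> k Hk; set j := nth ord0 l1 k.
have Hjin : j \in l1 by rewrite mem_nth.
have Hj0 : 0 < j.
  rewrite lt0n; apply/negP=> /eqP E; have : j = ord0 by apply: val_inj.
  by move=> E'; move: H0; rewrite -E' Hjin.
have Hjn : (nat_of_ord j).-1 < n by have := ltn_ord j; lia.
have Hnth : forall l, nth None (pinv m l) j.-1 = (if j \in l then insub (index j l) else None).
  move=> l; rewrite /pinv (nth_map ord0) ?size_map ?size_iota //.
  rewrite (nth_map 0) ?size_iota // nth_iota // add1n prednK // inord_val //.
have := congr1 (fun s => omap val (nth None s j.-1)) Heq; rewrite /= !Hnth Hjin.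
rewrite omap_insub index_uniq // -Hs1 Hk.
case: (boolP (j \in l2)) => Hj2 //; rewrite omap_insub; case: ifP => // _ [E].
by rewrite -/j E nth_index.
Qed.

Lemma chain_eq n m (C1 C2 : seq (forest n)) : is_chain n m C1 -> is_chain n m C2 ->
  chain_top m C1 = chain_top m C2 -> pinv m (JH m C1) = pinv m (JH m C2) -> C1 = C2.
Proof.
move=> H1 H2 Et Ep.
have G1 := C_good H1; have G2 := C_good H2.
have EJ : JH m C1 = JH m C2.
  case: G1 => _ Hs1 Hu1 _ _; case: G2 => _ Hs2 _ _ _.
  by apply: pinv_inj Hs1 Hs2 Hu1 (G_lam0 (C_good H1)) Ep.
by rewrite (C_eq H1) (C_eq H2) Et EJ.
Qed.

Theorem theorem3p4 (n m : nat) (hmn : m <= n) :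
  bij_chains_oforests (phi n m) /\ phi_spec (phi n m) /\
  (forall psi : seq (forest n) -> oforest n m,
     bij_chains_oforests psi -> phi_spec psi ->
     forall C, is_chain n m C -> psi C = phi n m C).
Proof.
have spec : phi_spec (phi n m).
  move=> C HC; rewrite phiE; split; [exact: G_prio (C_good HC) | exact: G_trav (C_good HC)].
have surj : forall F, is_oforest F -> exists2 C, is_chain n m C & phi n m C = F.
  move=> F HF; have HG := F_good hmn HF.
  exists (chain_of m (PF F) (flam F)); first exact: G_chain HG.
  by rewrite phiE (G_top HG) (G_JH HG) (phiPL_F hmn HF).
have bij : bij_chains_oforests (phi n m).
  split=> //.
    by move=> C HC; rewrite phiE; apply: G_of (C_good HC).
  move=> C1 C2 H1 H2 E.
  have [t1 p1] := spec C1 H1; have [t2 p2] := spec C2 H2.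
  apply: chain_eq H1 H2 _ _; first by rewrite -t1 -t2 E.
  by rewrite -p1 -p2 E.
split=> //; split=> // psi [Hof _ _] Hspec C HC.
have [C' HC' E'] := surj _ (Hof C HC).
have [t1 p1] := Hspec C HC; have [t2 p2] := spec C' HC'.
have EC : C = C'.
  apply: chain_eq HC HC' _ _; first by rewrite -t1 -t2 E'.
  by rewrite -p1 -p2 E'.
by rewrite -E' EC.
Qed.
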